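(* Let $\delta\in[1/3,1]$, $\alpha>0$ with $\alpha\delta<1$, and $\eta_0^{2}=\frac{1+\alpha^{2}}{1+\delta^{2}}$. Let $0\le B_0\le\sqrt{1-\eta_0^2\delta^2}$ and define $\widetilde{A_\ast}=\sqrt{1-(1+\delta^2)B_0^2}$ and $\Delta'=\varepsilon^{4}B_0^{4}(1+\delta^{2})^{4}-2\widetilde{A_\ast}^{2}$. If $\alpha\ge\frac{10}{3}\varepsilon^{2}$ and $\varepsilon>0$ is small enough, then $-\Delta'\ge\widetilde{A_\ast}^{2}$.
   Context: Note $1-\eta_0^2\delta^2=\frac{1-\alpha^2\delta^2}{1+\delta^2}$, so $\widetilde{A_\ast}\ge\alpha\delta$ on the given range of $B_0$. *)

(* Defs.v *)
From mathcomp Require Import all_boot all_order all_algebra.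
Set Implicit Arguments. Unset Strict Implicit. Unset Printing Implicit Defensive.

(* Main.v *)
Require Import Defs.
From mathcomp Require Import all_boot all_order all_algebra.
From mathcomp Require Import ring lra.
Import Order.TTheory GRing.Theory Num.Theory.
Local Open Scope ring_scope.

Theorem lemma2 (R : rcfType) :
  exists eps0 : R, 0 < eps0 /\
  forall (eps delta alpha eta0 B0 : R),
    0 < eps -> eps < eps0 ->
    3^-1 <= delta -> delta <= 1 ->
    0 < alpha -> alpha * delta < 1 ->
    eta0 ^+ 2 = (1 + alpha ^+ 2) / (1 + delta ^+ 2) ->
    0 <= B0 -> B0 <= Num.sqrt (1 - eta0 ^+ 2 * delta ^+ 2) ->
    alpha >= (10 / 3) * eps ^+ 2 ->
    let At := Num.sqrt (1 - (1 + delta ^+ 2) * B0 ^+ 2) in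
    let Delta' := eps ^+ 4 * B0 ^+ 4 * (1 + delta ^+ 2) ^+ 4 - 2 * At ^+ 2 in
    - Delta' >= At ^+ 2.
Proof.
exists 1; split; first by [].
move=> eps delta alpha eta0 B0 He _ Hd1 Hd2 Ha Had Heta HB0 HB Hae.
cbv zeta. set At := Num.sqrt (1 - _). set Delta' := (_ - 2 * _).
have Hd0 : 0 < delta by apply: lt_le_trans Hd1; rewrite invr_gt0.
have Hq : 0 < 1 + delta ^+ 2 by rewrite ltr_pwDl // sqr_ge0.
have Heq : 1 - eta0 ^+ 2 * delta ^+ 2 = (1 - (alpha * delta) ^+ 2) / (1 + delta ^+ 2).
  rewrite Heta; field; exact: lt0r_neq0.
have Hx0 : 0 <= alpha * delta by apply: mulr_ge0; apply: ltW.
have Hpos : 0 <= 1 - eta0 ^+ 2 * delta ^+ 2.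
  rewrite Heq; apply: divr_ge0; last exact: ltW.
  rewrite subr_ge0 expr2; nra.
have HB2 : B0 ^+ 2 <= 1 - eta0 ^+ 2 * delta ^+ 2.
  rewrite -[X in _ <= X](sqr_sqrtr Hpos).
  by rewrite ler_sqr // ?nnegrE // sqrtr_ge0.
set s := (1 + delta ^+ 2) * B0 ^+ 2.
have Hs : s <= 1 - (alpha * delta) ^+ 2.
  have := ler_wpM2l (ltW Hq) HB2; rewrite Heq [X in _ <= X]mulrC divfK //.
  exact: lt0r_neq0.
have Hs0 : 0 <= s by apply: mulr_ge0; [exact: ltW | exact: sqr_ge0].
have Hx2 : 0 <= (alpha * delta) ^+ 2 by exact: sqr_ge0.
have Hs1 : 0 <= 1 - s by lra.
have HAt : At ^+ 2 = 1 - s by rewrite /At sqr_sqrtr.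
have Hc : eps ^+ 2 * (1 + delta ^+ 2) <= alpha * delta.
  have Hdd : 0 <= (delta - 3^-1) * (3 - delta) by apply: mulr_ge0; lra.
  have He2 : 0 <= eps ^+ 2 by exact: sqr_ge0.
  have := ler_wpM2r (ltW Hd0) Hae.
  have : 0 <= eps ^+ 2 * ((delta - 3^-1) * (3 - delta)) by apply: mulr_ge0.
  move=> h1 h2; apply: le_trans h2; rewrite -subr_ge0.
  have -> : 10 / 3 * eps ^+ 2 * delta - eps ^+ 2 * (1 + delta ^+ 2)
    = eps ^+ 2 * ((delta - 3^-1) * (3 - delta)) by field.
  exact: h1.
set c := eps ^+ 2 * (1 + delta ^+ 2).
have Hc0 : 0 <= c by apply: mulr_ge0; [exact: sqr_ge0 | exact: ltW].
have HD : Delta' = (c * s) ^+ 2 - 2 * At ^+ 2.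
  by rewrite /Delta' /c /s; ring.
rewrite HD HAt.
have Hcs : c * s <= c by rewrite ler_piMr //; lra.
have Hcs0 : 0 <= c * s by apply: mulr_ge0.
have : (c * s) ^+ 2 <= (alpha * delta) ^+ 2.
  by rewrite ler_sqr ?nnegrE //; apply: le_trans Hc.
lra.
Qed.
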